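(* Let $M$ be a rational $\mathbb G_a$-module over $k$ of degree $<p^r$. Then for any finite sequence $\underline a=(a_0,a_1,\dots)$ in $k$, with $\underline b=(b_0,\dots,b_{r-1}):=(a_{r-1},\dots,a_0)$, the action of $\sum_{s\ge0}a_s^{p^s}u_s$ on $M$ equals the action of $\sum_{i=0}^{r-1}b_{r-1-i}^{p^i}u_i$ on $M$; the latter element of $k\mathbb G_{a(r)}=k[u_0,\dots,u_{r-1}]/(u_i^p)$ is the sum of the terms linear in the $u_i$ of $(\sigma_{\underline b}\circ i_r)_*(u_{r-1})$. In other words, the action of $\mathbb G_a$ on $M$ at $\sigma_{\underline a}$ equals the linearization of the action of $\mathbb G_{a(r)}$ on $M$ at $\sigma_{\underline b}\circ i_r$.
   Context: $k$ is an algebraically closed field of characteristic $p>0$. $\mathbb G_a$ is the additive group, $k[\mathbb G_a]=k[T]$; $\mathbb G_{a(r)}$ its $r$-th Frobenius kernel, $k[\mathbb G_{a(r)}]=k[T]/(T^{p^r})$, inclusion $i_r$. $k\mathbb G_a=k[u_0,u_1,\dots]/(u_i^p)$ with $u_i$ the functional reading off the coefficient of $T^{p^i}$; $k\mathbb G_{a(r)}=k[u_0,\dots,u_{r-1}]/(u_i^p)$; a homomorphism $\psi$ induces $\psi_*$ on group algebras. A rational $\mathbb G_a$-module is a comodule $\Delta_M:M\to M\otimes k[T]$, a $k\mathbb G_a$-module via $\phi\cdot m=\sum\phi(f_i)m_i$ when $\Delta_M(m)=\sum m_i\otimes f_i$; degree $<p^r$ means $\Delta_M(M)\subset M\otimes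 k[T]_{<p^r}$. For a finite sequence $\underline a$, $\sigma_{\underline a}:\mathbb G_a\to\mathbb G_a$ is $T\mapsto\sum_sa_sT^{p^s}$. The action of $\mathbb G_a$ on $M$ at $\sigma_{\underline a}$ is that of $\sum_sa_s^{p^s}u_s$; the action of $\mathbb G_{a(r)}$ on $M$ at $\mu:\mathbb G_{a(r)}\to\mathbb G_a$ is that of $\mu_*(u_{r-1})$. *)

(* Defs.v *)
From HB Require Import structures.
From mathcomp Require Import all_boot all_algebra.
Set Implicit Arguments. Unset Strict Implicit. Unset Printing Implicit Defensive.
Import GRing.Theory.
Local Open Scope ring_scope.

(* Conventions:
   - k[G_a] = k[T] with basis T^j.  An element phi of the group algebra
     kG_a (a k-linear functional on k[T]) is encoded by its values on the
     basis: phi : nat -> k, phi j = phi(T^j).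
   - An element of kG_{a(r)} (functional on k[T]/(T^{p^r})) is encoded the
     same way; only its values at j < p^r are used.
   - The product of kG_a is dual to the coproduct T^n |-> sum_i C(n,i) T^i (x) T^(n-i). *)

Section Defs.
Variable k : fieldType.
Variable p : nat.

Definition dist := nat -> k.

Definition u (i : nat) : dist := fun j => ((j == p ^ i)%N)%:R.

Definition dunit : dist := fun j => ((j == 0)%N)%:R.
Definition dmul (f g : dist) : dist :=
  fun n => \sum_(i < n.+1) ('C(n, i))%:R * f i * g (n - i)%N.
Definition dpow (f : dist) (e : nat) : dist := iter e (dmul f) dunit.

Definition umon (r : nat) (l : {ffun 'I_r -> 'I_p}) : dist :=
  \big[dmul/dunit]_(i < r) dpow (u i) (l i).

Definition linear_at (r : nat) (l : {ffun 'I_r -> 'I_p}) (i : 'I_r) : bool :=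
  [forall j, (l j : nat) == (j == i : nat)].

Definition sigma_poly (b : seq k) : {poly k} :=
  \sum_(s < size b) b`_s *: 'X^(p ^ s).

(* (sigma_b o i_r)_* : kG_{a(r)} -> kG_a.  The comorphism is
   f |-> f(sigma_b(T)) mod T^(p^r), so
   (sigma_b o i_r)_*(phi)(T^n) = phi((sigma_b(T))^n mod T^(p^r)). *)
Definition push_sigma_ir (r : nat) (b : seq k) (phi : dist) : dist :=
  fun n => \sum_(j < p ^ r) phi j * ((sigma_poly b) ^+ n)`_j.

Definition elt_sigma (a : seq k) : dist :=
  fun j => \sum_(s < size a) a`_s ^+ (p ^ s) * u s j.

(* b = (a_{r-1}, ..., a_0)  (a padded with zeros if shorter than r) *)
Definition bseqrev (a : seq k) (r : nat) : seq k :=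
  [seq nth 0 a (r.-1 - i) | i <- iota 0 r].

End Defs.

(* Rational G_a-module: comodule M -> M (x) k[T], m |-> sum_j (coef j m) (x) T^j,
   encoded by the list of coefficients. *)
Record rGaMod (k : fieldType) (M : lmodType k) := RGaMod {
  comod : M -> seq M;
  coef := fun (j : nat) (m : M) => nth 0 (comod m) j;
  coef_linear : forall j (a : k) (x y : M),
      coef j (a *: x + y) = a *: coef j x + coef j y;
  coef_counit : forall m, coef 0 m = m;
  coef_coassoc : forall i j m,
      coef i (coef j m) = ('C(i + j, i))%:R *: coef (i + j) m
}.

Section Act.
Variables (k : fieldType) (M : lmodType k) (D : rGaMod M).

Definition coefD (j : nat) (m : M) : M := nth 0 (comod D m) j.

Definition act (phi : dist k) (m : M) : M :=
  \sum_(j < size (comod D m)) phi j *: coefD j m.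

Definition deg_lt (N : nat) : Prop :=
  forall m j, (N <= j)%N -> coefD j m = 0.

End Act.

(* Main.v *)
From HB Require Import structures.
From mathcomp Require Import all_boot all_algebra.
Require Import Defs.
From Stdlib Require Import FunctionalExtensionality.
From mathcomp Require Import zify.
Import GRing.Theory.
Local Open Scope ring_scope.
Section Aux.
Variable k : fieldType.
Variable p : nat.
Hypothesis hp : prime p.
Hypothesis hchar : p \in [pchar k].

Definition pt (m : nat) (x : k) : dist k := fun j => if j == m then x else 0.

Lemma dunit_pt : dunit k = pt 0 1.
Proof. by apply: functional_extensionality => j; rewrite /dunit /pt; case: (j == 0)%N. Qed.

Lemma u_pt i : u k p i = pt (p ^ i) 1.
Proof. by apply: functional_extensionality => j; rewrite /u /pt; case: (j == _)%N. Qed.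

Lemma dmul_pt a b x y : dmul (pt a x) (pt b y) = pt (a + b) ('C(a + b, a)%:R * x * y).
Proof.
apply: functional_extensionality => n; rewrite /dmul /pt.
rewrite (eq_bigr (fun i : 'I_n.+1 => if (i == a :> nat) then ('C(n, a))%:R * x * (if (n - i)%N == b then y else 0) else 0)); last first.
  by move=> i _; case: eqP => [->|]; rewrite ?mulr0 ?mul0r.
rewrite -big_mkcond /=.
have := @big_ord1_eq k 0 (@GRing.add k) (fun i => ('C(n,a))%:R * x * (if (n - i)%N == b then y else 0)) a n.+1.
move=> ->.
case: (eqVneq n (a + b)%N) => [->|hn]; first by rewrite ltnS leq_addr addKn eqxx.
case: ifP => // han; case: eqP => [hb|]; last by rewrite mulr0.
by move: hn; rewrite -hb subnKC ?eqxx // -ltnS.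
Qed.


Lemma coefB (n m : nat) : ((('X + 1 : {poly k}) ^+ n)`_m) = ('C(n, m))%:R.
Proof.
rewrite exprD1n coef_sum.
rewrite (eq_bigr (fun i : 'I_n.+1 => if (i == m :> nat) then ('C(n, i))%:R else 0 : k)); last first.
  by move=> i _; rewrite coefMn coefXn eq_sym; case: (i == m :> nat); rewrite ?mul0rn ?mulr1n.
rewrite -(big_mkcond (fun i : 'I_n.+1 => i == m :> nat)) /= (@big_ord1_eq k 0 (@GRing.add k) (fun i => ('C(n, i))%:R)).
by case: ltnP => // h; rewrite bin_small.
Qed.

Lemma lucas (i q c s s' : nat) : (s < p ^ i)%N -> (s' < p ^ i)%N ->
  ('C(q * p ^ i + s, c * p ^ i + s'))%:R = ('C(q, c) * 'C(s, s'))%:R :> k.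
Proof.
move=> hs hs'; set P := (p ^ i)%N.
have hc' : p \in [pchar {poly k}] by rewrite pchar_poly.
have frob : ('X + 1 : {poly k}) ^+ P = 'X^P + 1.
  rewrite exprDn_pchar ?expr1n //.
  by rewrite (eq_pnat _ (pcharf_eq hc')) pnatX pnat_id.
rewrite -(coefB (q * P + s) (c * P + s')) exprD mulnC exprM frob exprD1n mulr_suml coef_sum.
rewrite (eq_bigr (fun j : 'I_q.+1 => if (j == c :> nat) then ('C(q, j) * 'C(s, s'))%:R else 0 : k)); last first.
  move=> j _; rewrite mulrnAl coefMn -exprM coefXnM coefB.
  have hP : (0 < P)%N by rewrite expn_gt0 prime_gt0.
  case: (ltngtP j c) => hjc.
  - have h1 : (P * j + P <= c * P)%N by nia.
    rewrite ifF; last by apply/negbTE; rewrite -leqNgt; lia.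
    rewrite bin_small ?mul0rn //; lia.
  - have h1 : (c * P + P <= P * j)%N by nia.
    by rewrite ifT ?mul0rn //; lia.
  - rewrite hjc ifF; last by apply/negbTE; rewrite -leqNgt mulnC leq_addr.
    by rewrite mulnC addKn natrM mulr_natr -!mulrnA mulnC.
rewrite -(big_mkcond (fun i : 'I_q.+1 => i == c :> nat)) /= (@big_ord1_eq k 0 (@GRing.add k) (fun j => ('C(q, j) * 'C(s, s'))%:R)).
by case: ltnP => // h; rewrite bin_small.
Qed.


Lemma dpow_u i e : (e < p)%N -> exists w : k,
  w != 0 /\ ((e <= 1)%N -> w = 1) /\ dpow (u k p i) e = pt (e * p ^ i) w.
Proof.
elim: e => [|e IH] he.
  by exists 1; split; [exact: oner_neq0 | split => //; rewrite /dpow /= dunit_pt].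
have [w [w0 [w1 E]]] := IH (ltnW he).
have -> : dpow (u k p i) e.+1 = dmul (u k p i) (dpow (u k p i) e) by [].
rewrite E u_pt dmul_pt mulr1.
have hP : (0 < p ^ i)%N by rewrite expn_gt0 prime_gt0.
have L : ('C(p ^ i + e * p ^ i, p ^ i))%:R = (e.+1)%:R :> k.
  have := lucas i e.+1 1 0 0 hP hP.
  by rewrite !addn0 mul1n bin1 bin0 muln1 mulSn.
rewrite L -mulSn.
exists (e.+1%:R * w); split; last split.
- rewrite mulf_neq0 // -(dvdn_pcharf hchar).
  apply/negP => /(dvdn_leq (ltn0Sn _)); rewrite leqNgt he //.
- move=> h1; have e0 : e = 0%N by lia.
  by rewrite w1 e0 ?mulr1.

- by [].
Qed.



Lemma big_u i0 r (l : 'I_r -> nat) : (forall j, l j < p)%N ->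
  exists v : k, v != 0 /\ ((forall j, l j <= 1)%N -> v = 1) /\
  \big[@dmul k/dunit k]_(j < r) dpow (u k p (i0 + j)) (l j)
    = pt (\sum_(j < r) l j * p ^ (i0 + j))%N v.
Proof.
elim: r i0 l => [|r IH] i0 l hl.
  by exists 1; split; [exact: oner_neq0 | split => //; rewrite !big_ord0 dunit_pt].
have [v [v0 [v1 E]]] := IH i0.+1 (fun j => l (lift ord0 j)) (fun j => hl _).
have [w [w0 [w1 E0]]] := @dpow_u i0 (l ord0) (hl ord0).
rewrite !big_ord_recl /= addn0 E0.
rewrite (eq_bigr (fun j : 'I_r => dpow (u k p (i0.+1 + j)) (l (lift ord0 j)))); last first.
  by move=> j _; rewrite /= addnS.
rewrite E dmul_pt.
set Q := (\sum_(j < r) l (lift ord0 j) * p ^ j)%N.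
have ES : (\sum_(j < r) l (lift ord0 j) * p ^ (i0 + bump 0 j))%N = (Q * p ^ i0.+1)%N.
  rewrite /Q big_distrl /=; apply: eq_bigr => j _.
  by rewrite /bump /= add1n addnS -addSn expnD -mulnA [(p ^ i0.+1 * _)%N]mulnC.
have ES' : (\sum_(j < r) l (lift ord0 j) * p ^ (i0.+1 + j))%N = (Q * p ^ i0.+1)%N.
  by rewrite -ES; apply: eq_bigr => j _; rewrite /bump /= add1n addnS.
rewrite ES'.
have hs : (l ord0 * p ^ i0 < p ^ i0.+1)%N.
  by rewrite expnS ltn_mul2r expn_gt0 prime_gt0 // hl.
have L : ('C(l ord0 * p ^ i0 + Q * p ^ i0.+1, l ord0 * p ^ i0))%:R = 1 :> k.
  have := @lucas i0.+1 Q 0 _ _ hs hs.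
  by rewrite mul0n add0n bin0 binn mul1n addnC => ->.
rewrite L mul1r.
exists (w * v); rewrite ES; split; last split => //.
- by rewrite mulf_neq0.
- move=> h; rewrite w1 ?v1 ?mulr1 //; try (move=> *; apply: h).
Qed.


Lemma digits r (d : nat -> nat) : (forall j, d j < p)%N ->
  (\sum_(j < r) d j * p ^ j < p ^ r)%N /\
  forall j, (j < r)%N -> ((\sum_(i < r) d i * p ^ i) %/ p ^ j %% p = d j)%N.
Proof.
move=> hd; have p1 := prime_gt1 hp.
elim: r => [|r [IH1 IH2]].
  by rewrite big_ord0 expn0; split => // j.
rewrite big_ord_recr /=.
set S := (\sum_(i < r) d i * p ^ i)%N in IH1 IH2 *.
have hpr : (0 < p ^ r)%N by rewrite expn_gt0 prime_gt0.
split.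
  have := hd r; rewrite expnS; nia.
move=> j; rewrite ltnS leq_eqVlt => /orP [/eqP ->|hj].
  by rewrite addnC divnMDl // divn_small // addn0 modn_small.
have E : (d r * p ^ r = (d r * p ^ (r - j).-1 * p) * p ^ j)%N.
  have Ep : (p ^ r = (p ^ (r - j).-1 * p) * p ^ j)%N.
    by rewrite -expnSr prednK ?subn_gt0 // -expnD subnK // ltnW.
  by rewrite {1}Ep !mulnA.
rewrite E addnC divnMDl ?expn_gt0 ?prime_gt0 // modnMDl; exact: IH2.
Qed.


Lemma frob_sum (I : Type) (sr : seq I) (F : I -> {poly k}) i :
  (\sum_(s <- sr) F s) ^+ (p ^ i) = \sum_(s <- sr) F s ^+ (p ^ i).
Proof.
have hc' : p \in [pchar {poly k}] by rewrite pchar_poly.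
have hn : ([pchar {poly k}].-nat (p ^ i))%N.
  by rewrite (eq_pnat _ (pcharf_eq hc')) pnatX pnat_id.
apply: (big_morph (fun x : {poly k} => x ^+ (p ^ i))).
  by move=> x y; rewrite exprDn_pchar.
by rewrite expr0n expn_eq0 eqn0Ngt prime_gt0.
Qed.

Lemma sig_frob (b : seq k) i m : (i <= m)%N -> (m - i < size b)%N ->
  ((sigma_poly p b) ^+ (p ^ i))`_(p ^ m) = b`_(m - i) ^+ (p ^ i).
Proof.
move=> him hmb; rewrite /sigma_poly frob_sum coef_sum.
rewrite (eq_bigr (fun s : 'I_(size b) => if (s == (m - i)%N :> nat) then b`_s ^+ (p ^ i) else 0)); last first.
  move=> s _; rewrite exprZn -exprM -expnD coefZ coefXn eqn_exp2l ?prime_gt1 //.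
  have -> : (m == s + i)%N = (s == (m - i)%N :> nat) by apply/eqP/eqP; lia.
  by case: (s == (m - i)%N :> nat); rewrite ?mulr1 ?mulr0.
rewrite -(big_mkcond (fun s : 'I_(size b) => s == (m - i)%N :> nat)) /=.
by rewrite (@big_ord1_eq k 0 (@GRing.add k) (fun s => b`_s ^+ (p ^ i))) hmb.
Qed.

Lemma sig_low (b : seq k) n m : (m < n)%N -> ((sigma_poly p b) ^+ n)`_m = 0.
Proof.
move=> hmn.
have -> : sigma_poly p b = 'X * \sum_(s < size b) b`_s *: 'X^((p ^ s).-1).
  rewrite /sigma_poly mulr_sumr; apply: eq_bigr => s _.
  by rewrite -scalerAr -exprS prednK // expn_gt0 prime_gt0.
by rewrite exprMn coefXnM hmn.
Qed.


Lemma sum_u_pow (F : nat -> k) N s0 :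
  \sum_(s < N) F s * u k p s (p ^ s0)%N = if (s0 < N)%N then F s0 else 0.
Proof.
rewrite (eq_bigr (fun s : 'I_N => if (s == s0 :> nat) then F s else 0)); last first.
  move=> s _; rewrite /u eqn_exp2l ?prime_gt1 // eq_sym.
  by case: (s == s0 :> nat); rewrite ?mulr1 ?mulr0.
rewrite -(big_mkcond (fun s : 'I_N => s == s0 :> nat)) /=.
by rewrite (@big_ord1_eq k 0 (@GRing.add k) F).
Qed.

Lemma sum_u_nopow (F : nat -> k) N j : (forall s, j != p ^ s)%N ->
  \sum_(s < N) F s * u k p s j = 0.
Proof.
by move=> h; apply: big1 => s _; rewrite /u (negbTE (h s)) mulr0.
Qed.

Lemma pow_or_not j : (exists s, j = p ^ s)%N \/ (forall s, j != p ^ s)%N.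
Proof.
case: (pickP (fun s : 'I_j.+1 => j == p ^ s)%N) => [s /eqP -> | hno].
  by left; exists s.
right => s; apply/negP => /eqP hj.
have hs : (s < j.+1)%N by rewrite hj ltnS ltnW // ltn_expl // prime_gt1.
by have := hno (Ordinal hs); rewrite /= hj eqxx.
Qed.


Definition Nl r (l : {ffun 'I_r -> 'I_p}) : nat := (\sum_(j < r) l j * p ^ j)%N.
Arguments Nl {r}.

Lemma Nl_digits {r} (hr : (0 < r)%N) (l : {ffun 'I_r -> 'I_p}) :
  (Nl l < p ^ r)%N /\ forall j : 'I_r, (Nl l %/ p ^ j %% p)%N = l j.
Proof.
pose o0 : 'I_r := Ordinal hr.
pose d := fun j => nat_of_ord (l (insubd o0 j)).
have E : Nl l = (\sum_(j < r) d j * p ^ j)%N.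
  by apply: eq_bigr => j _; rewrite /d valKd.
have [h1 h2] := @digits r d (fun j => ltn_ord _).
split; first by rewrite E.
by move=> j; rewrite E h2 // /d valKd.
Qed.

Lemma Nl_inj {r} (hr : (0 < r)%N) : injective (@Nl r).
Proof.
move=> l1 l2 E; apply/ffunP => j; apply: val_inj.
have [_ h1] := Nl_digits hr l1; have [_ h2] := Nl_digits hr l2.
by rewrite /= -h1 -h2 E.
Qed.

Lemma Nl_onto {r} (hr : (0 < r)%N) n : (n < p ^ r)%N ->
  exists l : {ffun 'I_r -> 'I_p}, Nl l = n.
Proof.
move=> hn.
pose f := fun l : {ffun 'I_r -> 'I_p} => Ordinal (proj1 (Nl_digits hr l)).
have finj : injective f.
  by move=> l1 l2 /(congr1 val) /= E; apply: (Nl_inj hr).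
have hc : (#|'I_(p ^ r)| <= #|{ffun 'I_r -> 'I_p}|)%N by rewrite card_ffun !card_ord.
have := inj_card_onto finj hc (Ordinal hn).
by case/codomP => l /(congr1 val) /= ->; exists l.
Qed.

Lemma umon_pt {r} (l : {ffun 'I_r -> 'I_p}) : exists v : k,
  v != 0 /\ ((forall j, l j <= 1)%N -> v = 1) /\ umon k l = pt (Nl l) v.
Proof.
have [v [v0 [v1 E]]] := @big_u 0 r (fun j => nat_of_ord (l j)) (fun j => ltn_ord _).
by exists v.
Qed.

End Aux.
Theorem proposition3p8 (k : closedFieldType) (p : nat) (hp : prime p)
  (hchar : p \in [pchar k]) (M : lmodType k) (D : rGaMod M) (r : nat)
  (hr : (0 < r)%N) (hdeg : deg_lt D (p ^ r)) (a : seq k) :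
  let b := bseqrev a r in
  let lin : dist k := fun j => \sum_(i < r) (nth 0 b (r.-1 - i)) ^+ (p ^ i) * u k p i j in
  let psi_u := push_sigma_ir p r b (u k p r.-1) in
  (forall m, act D (elt_sigma p a) m = act D lin m) /\
  (exists c : {ffun 'I_r -> 'I_p} -> k,
      forall n, psi_u n = \sum_(l : {ffun 'I_r -> 'I_p}) c l * umon k l n) /\
  (forall c : {ffun 'I_r -> 'I_p} -> k,
      (forall n, psi_u n = \sum_(l : {ffun 'I_r -> 'I_p}) c l * umon k l n) ->
      forall j, \sum_(i < r) (\sum_(l | linear_at l i) c l) * u k p i j = lin j).
Proof.
move=> b lin psi_u.
have p1 := prime_gt1 hp.
have hpr : forall i, (0 < p ^ i)%N by move=> i; rewrite expn_gt0 prime_gt0.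
have hb : size b = r by rewrite /b /bseqrev size_map size_iota.
have hbn : forall i, (i < r)%N -> nth 0 b (r.-1 - i) = nth 0 a i.
  move=> i hi; rewrite /b /bseqrev (nth_map 0%N) ?size_iota; last lia.
  rewrite nth_iota; last lia.
  by congr nth; lia.
have hpsi : forall n, psi_u n = ((sigma_poly p b) ^+ n)`_(p ^ r.-1).
  move=> n; rewrite /psi_u /push_sigma_ir.
  rewrite (eq_bigr (fun j : 'I_(p ^ r) => if (j == p ^ r.-1 :> nat)%N then ((sigma_poly p b) ^+ n)`_j else 0)); last first.
    by move=> j _; rewrite /u; case: (j == _ :> nat); rewrite ?mul1r ?mul0r.
  rewrite -(big_mkcond (fun j : 'I_(p ^ r) => j == p ^ r.-1 :> nat)%N) /=.
  rewrite (@big_ord1_eq k 0 (@GRing.add k) (fun j => ((sigma_poly p b) ^+ n)`_j)).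
  by rewrite ltn_exp2l // ltn_predL hr.
split.
  move=> m; rewrite /act; apply: eq_bigr => j _.
  case: (ltnP j (p ^ r)) => hj; last by rewrite hdeg ?scaler0.
  congr (_ *: _); rewrite /elt_sigma /lin.
  case: (pow_or_not p hp j) => [[s0 E]| hno].
    rewrite E.
    rewrite (sum_u_pow k p hp (fun s => a`_s ^+ (p ^ s))).
    rewrite (sum_u_pow k p hp (fun i => (nth 0 b (r.-1 - i)) ^+ (p ^ i))).
    have hs0 : (s0 < r)%N by move: hj; rewrite E ltn_exp2l.
    rewrite hs0 hbn //; case: ltnP => // h.
    by rewrite nth_default // expr0n (gtn_eqF (hpr s0)).
  rewrite (sum_u_nopow k p (fun s => a`_s ^+ (p ^ s))) //.
  by rewrite (sum_u_nopow k p (fun i => (nth 0 b (r.-1 - i)) ^+ (p ^ i))).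
pose V := fun l : {ffun 'I_r -> 'I_p} => umon k l (Nl p r l).
have Hum : forall l n, umon k l n = if n == Nl p r l then V l else 0.
  move=> l n; have [v [v0 [_ E]]] := umon_pt k p hp hchar l.
  by rewrite /V E /pt eqxx.
have hV : forall l, V l != 0.
  move=> l; have [v [v0 [_ E]]] := umon_pt k p hp hchar l.
  by rewrite /V E /pt eqxx.
have hNlt : forall l, (Nl p r l < p ^ r)%N.
  by move=> l; have [h _] := Nl_digits k p hp hchar hr l.
split.
  exists (fun l => psi_u (Nl p r l) / V l) => n.
  case: (ltnP n (p ^ r)) => hn.
    have [l0 hl0] := Nl_onto k p hp hchar hr _ hn.
    rewrite (bigD1 l0) //= big1 ?addr0.
      by rewrite Hum hl0 eqxx divfK.
    move=> l hl; rewrite Hum; case: eqP => [E|]; last by rewrite mulr0.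
    by exfalso; move/eqP: hl; apply; apply: (Nl_inj k p hp hchar hr); rewrite -E.
  rewrite hpsi (sig_low k p hp); last first.
    by apply: leq_trans hn; rewrite ltn_exp2l // ltn_predL.
  symmetry; apply: big1 => l _; rewrite Hum ifF ?mulr0 //.
  by apply/negbTE; rewrite neq_ltn (leq_trans (hNlt l) hn) orbT.
move=> c Hc j; rewrite /lin; apply: eq_bigr => i _; congr (_ * _).
pose e : {ffun 'I_r -> 'I_p} := [ffun j => if j == i then Ordinal p1 else Ordinal (prime_gt0 hp)].
have hlin : forall l, linear_at l i = (l == e).
  move=> l; apply/forallP/eqP => [h|->].
    apply/ffunP => j'; apply: val_inj => /=; rewrite ffunE (eqP (h j')).
    by case: (j' == i).
  by move=> j'; rewrite ffunE; case: (j' == i).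
rewrite (eq_bigl (pred1 e)); last by move=> l; rewrite /= hlin.
rewrite big_pred1_eq.
have hNe : Nl p r e = (p ^ i)%N.
  rewrite /Nl (bigD1 i) //= big1 ?addn0; first by rewrite ffunE eqxx mul1n.
  by move=> j' hj'; rewrite ffunE (negbTE hj') mul0n.
have Ve : V e = 1.
  have [v [_ [v1 E]]] := umon_pt k p hp hchar e.
  rewrite /V E /pt eqxx v1 // => j'; rewrite ffunE; by case: (j' == i).
have H := Hc (p ^ i)%N.
have Hs : psi_u (p ^ i)%N = b`_(r.-1 - i) ^+ (p ^ i).
  have := ltn_ord i => hi.
  rewrite hpsi (sig_frob k p hp hchar) //; [lia | rewrite hb; lia].
rewrite Hs in H.
rewrite (bigD1 e) //= big1 ?addr0 in H.
  by rewrite H Hum hNe eqxx Ve mulr1.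
move=> l hl; rewrite Hum ifF ?mulr0 //; apply/negbTE; rewrite -hNe.
by apply: contra hl => /eqP /(Nl_inj k p hp hchar hr) ->.
Qed.
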